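(* Consider the following binary classification model of feature learning. Let $p_d\in[0,1]$, $p_r = 1-p_d$, and let $t_d, t_r, n_d, n_r, c_d, c_r$ be nonnegative integers with $n_d \le t_d$, $n_r\le t_r$, $c_d\le t_d$, $c_r\le t_r$. Each class $y\in\{1,2\}$ has its own set $D_y$ of $t_d$ dominant features and its own set $R_y$ of $t_r$ rare features, all these sets being pairwise disjoint. A data point $(x,y)$ is generated as follows: $y$ is uniform on $\{1,2\}$; then with probability $p_d$ the point is dominant, and its feature set $\Pi(x)$ is a uniformly random $n_d$-element subset of $D_y$ (sampled without replacement); otherwise (probability $p_r$) it is rare, and $\Pi(x)$ is a uniformly random $n_r$-element subset of $R_y$. A model $f$ is drawn, independently of the data, by choosing for each class $y$ a uniformly random $c_d$-element subset of $D_y$ and a uniformly random $c_r$-element subset of $R_y$ (all choices independent); $\Pi(f)$ is the union of these subsets. On $(x,y)$, $f$ predicts $y$ if $\Pi(f)\cap\Pi(x)\neq\varnothing$, and otherwise outputs a uniformly random guess in $\{1,2\}$, so its expected error on $(x,y)$ is $\frac12\mathbf{1}\{\Pi(f)\cap\Pi(x)=\varnothing\}$. Then, with the convention $\binom{n}{r}=0$ when $n<r$, the expected accuracy over the model distribution and the data distribution is $$\mathsf{Acc} = p_d\left(1-\frac12\frac{\binom{t_d-c_d}{n_d}}{\binom{t_d}{n_d}}\right) + p_r\left(1-\frac12\frac{\binom{t_r-c_r}{n_r}}{\binom{t_r}{n_r}}\right).$$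
   Context: In the paper, $c$ denotes the total model capacity, with $c_d=\frac12 p_d c$ and $c_r = \frac12 p_r c$, both rounded to integers so that the total number of features of a model is $c$. These serve only to define $c_d,c_r$; the statement holds for any such integers. *)

(* Defs.v *)
(* finite uniform probability written as explicit averages. *)
From HB Require Import structures.
From mathcomp Require Import all_boot all_order all_algebra.
Set Implicit Arguments. Unset Strict Implicit. Unset Printing Implicit Defensive.
Import Order.TTheory GRing.Theory Num.Theory.
Local Open Scope ring_scope.

(* Features: a class label in 'I_2 (class 1 = ord0, class 2 = ord_max) and
   either a dominant index in 'I_td or a rare index in 'I_tr. *)
Definition feature (td tr : nat) := ('I_2 * ('I_td + 'I_tr))%type.

Definition domset (td tr : nat) (y : 'I_2) : {set feature td tr} :=
  [set (y, inl i) | i : 'I_td].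
Definition rareset (td tr : nat) (y : 'I_2) : {set feature td tr} :=
  [set (y, inr j) | j : 'I_tr].

Definition ksubsets (T : finType) (A : {set T}) (k : nat) : {set {set T}} :=
  [set S : {set T} | (S \subset A) && (#|S| == k)%N].

Definition avg (R : realFieldType) (T : finType) (A : {set T}) (F : T -> R) : R :=
  (#|A|%:R)^-1 * \sum_(a in A) F a.

Definition class1 : 'I_2 := ord0.
Definition class2 : 'I_2 := ord_max.

Definition acc_pt (R : realFieldType) (T : finType) (Pf Px : {set T}) : R :=
  1 - 2^-1 * (if Pf :&: Px == set0 then 1 else 0).

Definition model_exp (R : realFieldType) (td tr cd cr : nat)
  (G : {set feature td tr} -> R) : R :=
  avg (ksubsets (domset td tr class1) cd) (fun A1 =>
  avg (ksubsets (rareset td tr class1) cr) (fun B1 =>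
  avg (ksubsets (domset td tr class2) cd) (fun A2 =>
  avg (ksubsets (rareset td tr class2) cr) (fun B2 =>
    G (A1 :|: B1 :|: A2 :|: B2))))).

Definition data_exp (R : realFieldType) (td tr : nat) (pd : R) (nd nr : nat)
  (H : {set feature td tr} -> 'I_2 -> R) : R :=
  avg [set: 'I_2] (fun y =>
    pd * avg (ksubsets (domset td tr y) nd) (fun X => H X y)
    + (1 - pd) * avg (ksubsets (rareset td tr y) nr) (fun X => H X y)).

Definition Acc (R : realFieldType) (td tr : nat) (pd : R) (nd nr cd cr : nat) : R :=
  @model_exp R td tr cd cr (fun Pf => data_exp pd nd nr (fun Px (_ : 'I_2) => acc_pt R Pf Px)).

(* Main.v *)
Require Import Defs.
From HB Require Import structures.
From mathcomp Require Import all_boot all_order all_algebra.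
From mathcomp Require Import ring lra.
Import Order.TTheory GRing.Theory Num.Theory.
Local Open Scope ring_scope.

Lemma card_ks (T : finType) (D : {set T}) k : #|ksubsets D k| = 'C(#|D|, k).
Proof. exact: cards_draws. Qed.

Lemma avg_const (R : realFieldType) (T : finType) (A : {set T}) (F : T -> R) c :
  (0 < #|A|)%N -> (forall a, a \in A -> F a = c) -> avg A F = c.
Proof.
move=> A0 HF; rewrite /avg (eq_bigr (fun _ => c)) // sumr_const -[c *+ _]mulr_natr.
by rewrite mulrCA mulVf ?mulr1 // pnatr_eq0 -lt0n.
Qed.

Lemma avg_acc (R : realFieldType) (T : finType) (D Pf : {set T}) n :
  (n <= #|D|)%N ->
  avg (ksubsets D n) (fun X => acc_pt R Pf X) =
  1 - 2^-1 * ('C(#|D| - #|Pf :&: D|, n)%:R / 'C(#|D|, n)%:R).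
Proof.
move=> nD; rewrite /avg /acc_pt sumrB -mulr_sumr sumr_const card_ks.
rewrite -big_mkcondr /=.
have -> : \sum_(i | (i \in ksubsets D n) && (Pf :&: i == set0)) (1 : R)
          = ('C(#|D| - #|Pf :&: D|, n))%:R.
  rewrite (eq_bigr (fun _ => (1%N)%:R)) // -natr_sum sum1_card.
  have -> : (#|D| - #|Pf :&: D|)%N = #|D :\: Pf|.
    by rewrite cardsD setIC.
  rewrite -card_ks; congr (_%:R); apply: eq_card => X.
  rewrite /ksubsets unfold_in /= !inE subsetD.
  case sXD: (X \subset D) => //=.
  by rewrite andbC setI_eq0 disjoint_sym.
have C0 : ('C(#|D|, n))%:R != 0 :> R by rewrite pnatr_eq0 -lt0n bin_gt0.
field; exact: C0.
Qed.

Section Feat.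
Variables td tr : nat.

Lemma mem_dom (x : feature td tr) y :
  (x \in domset td tr y) = (x.1 == y) && (if x.2 is inl _ then true else false).
Proof.
case: x => a [i|j] /=; rewrite ?andbT ?andbF.
  apply/imsetP/eqP => [[k _ [-> _]] // | ->]; by exists i.
by apply/negbTE/imsetP => -[k _ []].
Qed.

Lemma mem_rare (x : feature td tr) y :
  (x \in rareset td tr y) = (x.1 == y) && (if x.2 is inr _ then true else false).
Proof.
case: x => a [i|j] /=; rewrite ?andbT ?andbF.
  by apply/negbTE/imsetP => -[k _ []].
apply/imsetP/eqP => [[k _ [-> _]] // | ->]; by exists j.
Qed.

Lemma card_dom y : #|domset td tr y| = td.
Proof. by rewrite card_imset ?card_ord // => i j [] ->. Qed.

Lemma card_rare y : #|rareset td tr y| = tr.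
Proof. by rewrite card_imset ?card_ord // => i j [] ->. Qed.

Lemma c12 : class1 != class2. Proof. by []. Qed.

Lemma dis_dr y y' : [disjoint domset td tr y & rareset td tr y'].
Proof. by rewrite -setI_eq0; apply/eqP/setP => -[a [i|j]]; rewrite !inE mem_dom mem_rare /= ?andbF. Qed.

Lemma dis_dd : [disjoint domset td tr class1 & domset td tr class2].
Proof. by rewrite -setI_eq0; apply/eqP/setP => -[a [i|j]]; rewrite !inE !mem_dom /= ?andbT ?andbF //; case: eqP => // ->. Qed.

Lemma dis_rr : [disjoint rareset td tr class1 & rareset td tr class2].
Proof. by rewrite -setI_eq0; apply/eqP/setP => -[a [i|j]]; rewrite !inE !mem_rare /= ?andbT ?andbF //; case: eqP => // ->. Qed.

End Feat.

Lemma setI4 (T : finType) (A B C E D X : {set T}) :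
  X \subset D ->
  (X = A /\ [disjoint B & D] /\ [disjoint C & D] /\ [disjoint E & D]) \/
  (X = B /\ [disjoint A & D] /\ [disjoint C & D] /\ [disjoint E & D]) \/
  (X = C /\ [disjoint A & D] /\ [disjoint B & D] /\ [disjoint E & D]) \/
  (X = E /\ [disjoint A & D] /\ [disjoint B & D] /\ [disjoint C & D]) ->
  ((A :|: B) :|: C :|: E) :&: D = X.
Proof.
move=> sX [|[|[|]]] [eX [d1 [d2 d3]]]; subst X; rewrite !setIUl (setIidPl sX);
  by rewrite !disjoint_setI0 // ?setU0 ?set0U.
Qed.

Ltac dj := apply: disjointWl; [eassumption|];
  first [apply: dis_dr | apply: dis_dd | apply: dis_rr |
         rewrite disjoint_sym; first [apply: dis_dr | apply: dis_dd | apply: dis_rr]].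

Ltac br := split; [done | split; [dj | split; dj]].
Ltac pick := first [left; br | right; left; br | right; right; left; br | right; right; right; br].

Theorem mainTheorem1 (R : realFieldType) (pd : R) (td tr nd nr cd cr : nat) :
  0 <= pd <= 1 ->
  (nd <= td)%N -> (nr <= tr)%N -> (cd <= td)%N -> (cr <= tr)%N ->
  Acc td tr pd nd nr cd cr =
    pd * (1 - 2^-1 * ('C(td - cd, nd)%:R / 'C(td, nd)%:R))
    + (1 - pd) * (1 - 2^-1 * ('C(tr - cr, nr)%:R / 'C(tr, nr)%:R)).
Proof.
move=> _ ndt nrt cdt crt.
rewrite /Acc /model_exp.
apply: avg_const => [|A1]; first by rewrite card_ks bin_gt0 card_dom.
rewrite inE => /andP[sA1 /eqP cA1].
apply: avg_const => [|B1]; first by rewrite card_ks bin_gt0 card_rare.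
rewrite inE => /andP[sB1 /eqP cB1].
apply: avg_const => [|A2]; first by rewrite card_ks bin_gt0 card_dom.
rewrite inE => /andP[sA2 /eqP cA2].
apply: avg_const => [|B2]; first by rewrite card_ks bin_gt0 card_rare.
rewrite inE => /andP[sB2 /eqP cB2].
rewrite /data_exp; apply: avg_const => [|y _]; first by rewrite cardsT card_ord.
rewrite !avg_acc ?card_dom ?card_rare //.
have [-> | ->] : y = class1 \/ y = class2.
  by case: y => [[|[|m]] Hm] //; [left|right]; apply/val_inj.
- rewrite (@setI4 _ _ _ _ _ _ A1 sA1) // ?(@setI4 _ _ _ _ _ _ B1 sB1) // ?cA1 ?cB1 //;
    try pick.
- rewrite (@setI4 _ _ _ _ _ _ A2 sA2) // ?(@setI4 _ _ _ _ _ _ B2 sB2) // ?cA2 ?cB2 //;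
    try pick.
Qed.
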